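(* A compact space $K$ has the property that every zero-dimensional continuous image of $K$ is metrizable if and only if $K$ has at most countably many clopen subsets. *)

(* Defs.v *)
From HB Require Import structures.
From mathcomp Require Import all_boot all_order all_algebra.
From mathcomp Require Import all_classical all_reals topology.
From Stdlib Require Import Rdefinitions.

Set Implicit Arguments.
Unset Strict Implicit.
Unset Printing Implicit Defensive.

Local Open Scope classical_set_scope.

(* Zero-dimensional (paper's sense): the space has a base of clopen sets. *)
Definition clopen_base_space (T : topologicalType) : Prop :=
  forall (U : set T) (x : T), open U -> U x ->
    exists V : set T, clopen V /\ V x /\ V `<=` U.

Definition is_metric_for (T : topologicalType) (d : T -> T -> R) : Prop :=
  (forall x y, Rle 0 (d x y)) /\
  (forall x y, d x y = 0%R <-> x = y) /\
  (forall x y, d x y = d y x) /\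
  (forall x y z, Rle (d x z) (Rplus (d x y) (d y z))) /\
  (forall A : set T, open A <->
     (forall x, A x -> exists e : R, Rlt 0 e /\ [set y | Rlt (d x y) e] `<=` A)).

Definition metrizable_space (T : topologicalType) : Prop :=
  exists d : T -> T -> R, is_metric_for d.

(* Main.v *)
Require Import Defs.
From HB Require Import structures.
From mathcomp Require Import all_boot all_order all_algebra.
From mathcomp Require Import all_classical all_reals topology.
From Stdlib Require Import Rdefinitions Rbase Rfunctions Lra.

Set Implicit Arguments.
Unset Strict Implicit.
Unset Printing Implicit Defensive.
Local Open Scope classical_set_scope.
Local Open Scope R_scope.
Definition PT (T : topologicalType) (x0 : T) : Type := T.
HB.instance Definition _ (T : topologicalType) (x0 : T) := Topological.copy (PT x0) T.
HB.instance Definition _ (T : topologicalType) (x0 : T) := isPointed.Build (PT x0) x0.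

Lemma fin_cover (T : topologicalType) (cT : compact [set: T]) (f : T -> set T) :
  (forall i, open (f i)) -> (forall y, exists i, f i y) ->
  exists s : seq T, forall y, exists i, i \in s /\ f i y.
Proof.
move=> fo fc.
have [[x0 _]|nT] := pselect (exists x : T, True); last first.
  by exists [::] => y; exfalso; apply: nT; exists y.
have cT' : compact [set: PT x0] := cT.
move: cT'; rewrite compact_cover => /(_ (PT x0) setT f).
case.
- by move=> i _; exact: fo.
- by move=> y _; have [i fi] := fc y; exists i.
move=> D' _ hc; exists (finmap.enum_fset D') => y; have [c /= cD cy] := hc y I.
by exists c.
Qed.


Lemma ball_open (T : topologicalType) (d : T -> T -> R) (hd : is_metric_for d) x e :
  open [set y | d x y < e].
Proof.
have [d0 [dz [dsym [dtri dop]]]] := hd.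
apply/dop => y /= hy; exists (e - d x y); split; first lra.
move=> z /= hz; have := dtri x y z; lra.
Qed.

Lemma net (T : topologicalType) (cT : compact [set: T]) (d : T -> T -> R)
  (hd : is_metric_for d) e : 0 < e ->
  exists s : seq T, forall y, exists c, c \in s /\ d c y < e.
Proof.
move=> e0; have [d0 [dz [dsym [dtri dop]]]] := hd.
apply: (fin_cover cT (f := fun x => [set y | d x y < e])).
- by move=> i; exact: ball_open.
- move=> y; exists y => //=; rewrite (proj2 (dz y y) erefl); lra.
Qed.

Lemma seq_min (T : eqType) (e : T -> R) (s : seq T) :
  (forall x, 0 < e x) -> exists del, 0 < del /\ forall x, x \in s -> del <= e x.
Proof.
move=> he; elim: s => [|a s [del [d0 hd]]].
  by exists 1; split; [lra|].
exists (Rmin del (e a)); split; first by apply: Rmin_glb_lt => //; exact: he.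
move=> x; rewrite in_cons => /orP[/eqP ->|/hd h]; first exact: Rmin_r.
apply: Rle_trans h; exact: Rmin_l.
Qed.

Lemma lebesgue (T : topologicalType) (cT : compact [set: T]) (d : T -> T -> R)
  (hd : is_metric_for d) (C : set T) : clopen C ->
  exists del, 0 < del /\ forall y z, d y z < del -> C y -> C z.
Proof.
move=> [oC cC]; have [d0 [dz [dsym [dtri dop]]]] := hd.
have hx : forall x, exists e, 0 < e /\
   ([set y | d x y < e] `<=` C \/ [set y | d x y < e] `<=` ~` C).
  move=> x; have [Cx|nCx] := pselect (C x).
    by have [e [e0 he]] := (proj1 (dop C) oC) x Cx; exists e; split=> //; left.
  have [e [e0 he]] := (proj1 (dop (~` C)) (closed_openC cC)) x nCx.
  by exists e; split=> //; right.
have [e he] := choice hx.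
have fo : forall i, open [set y | d i y < e i / 2].
  by move=> i; exact: (ball_open hd).
have fc : forall y, exists i, [set y | d i y < e i / 2] y.
  move=> y; exists y => /=; rewrite (proj2 (dz y y) erefl).
  have := proj1 (he y); lra.
have [s hs] := fin_cover cT fo fc.
have [del [del0 hdel]] : exists del, 0 < del /\ forall x, x \in s -> del <= e x / 2.
  by apply: seq_min => x; have := proj1 (he x); lra.
exists del; split=> // y z yz Cy.
have [x [xs xy]] := hs y; have := hdel x xs => /= dle; move: xy => /= xy.
have xz : d x z < e x by have := dtri x y z; lra.
have xy' : d x y < e x by have := proj1 (he x); lra.
case: (proj2 (he x)) => h; first exact: h.
by exfalso; exact: (h y xy').
Qed.

Lemma half_pow_pos n : 0 < (/2) ^ n.
Proof. apply: pow_lt; lra. Qed.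

Lemma half_pow_small e : 0 < e -> exists n, (/2) ^ n < e.
Proof.
move=> e0; have [|N hN] := pow_lt_1_zero (/2) _ e e0.
  rewrite Rabs_pos_eq; lra.
exists N; have := hN N (le_n N); rewrite Rabs_pos_eq //.
exact: Rlt_le (half_pow_pos N).
Qed.

Lemma compact_metric_countable (T : topologicalType) (cT : compact [set: T])
  (d : T -> T -> R) (hd : is_metric_for d) : countable [set C : set T | clopen C].
Proof.
have [d0 [dz [dsym [dtri dop]]]] := hd.
have [N hN] := choice (fun n => net cT hd (half_pow_pos n)).
have hgood : forall C : set T, exists n, clopen C ->
    forall y z, d y z < 2 * (/2) ^ n -> C y -> C z.
  move=> C; have [cC|ncC] := pselect (clopen C); last by exists O.
  have [del [del0 hdel]] := lebesgue cT hd cC.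
  have [n hn] : exists n, (/2) ^ n < del / 2 by apply: half_pow_small; lra.
  exists n => _ y z yz; apply: hdel; lra.
have [nC hnC] := choice hgood.
pose code (C : set T) := (nC C,
  [seq `[< exists y, C y /\ d c y < (/2) ^ (nC C) >] | c <- N (nC C)]).
have key : forall C1 C2, clopen C1 -> clopen C2 -> code C1 = code C2 ->
    C1 `<=` C2.
  move=> C1 C2 c1 c2 [en em] z C1z.
  have [c [cN cz]] := hN (nC C1) z.
  have : `[< exists y, C1 y /\ d c y < (/2) ^ (nC C1) >].
    by apply/asboolP; exists z.
  rewrite -en in em; move/eq_in_map: em => /(_ c cN) /= -> /asboolP [y [C2y cy]].
  apply: (hnC C2 c2 y z) => //.
  have := dtri y c z; have := dsym y c; rewrite -en; lra.
apply/countable_injP; exists (fun C => pickle (code C)).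
move=> C1 C2; rewrite !inE => c1 c2 /(pcan_inj pickleK) e.
rewrite predeqE => x; split; [exact: key|exact: key].
Qed.
Lemma half_pow_le1 k : (/2) ^ k <= 1.
Proof. elim: k => [|k IH] /=; first lra. have := half_pow_pos k; lra. Qed.

Lemma half_pow_lt m n : (m < n)%nat -> (/2) ^ n < (/2) ^ m.
Proof.
move=> mn; rewrite -(subnKC (ltnW mn)) pow_add.
have h1 := half_pow_pos m.
have h2 : (/2) ^ (n - m) < 1.
  case E: (n - m)%nat => [|j]; first by move/eqP: E; rewrite subn_eq0 leqNgt mn.
  rewrite /=; have := half_pow_le1 j; have := half_pow_pos j; lra.
have := Rmult_lt_compat_l _ _ _ h1 h2; lra.
Qed.

Lemma half_pow_le m n : (n <= m)%nat -> (/2) ^ m <= (/2) ^ n.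
Proof.
rewrite leq_eqVlt => /orP[/eqP ->|/half_pow_lt h]; [lra|lra].
Qed.

Lemma enum_clopen (L : topologicalType) (cL : countable [set C : set L | clopen C]) :
  exists g : nat -> set L, (forall n, clopen (g n)) /\
     forall C, clopen C -> exists n, g n = C.
Proof.
have /countable_injP [f finj] := cL.
have h : forall n, exists C : set L, clopen C /\
    ((exists C', clopen C' /\ f C' = n) -> f C = n).
  move=> n; have [[C' [cC' fC']]|nC] := pselect (exists C', clopen C' /\ f C' = n).
    by exists C'; split.
  exists set0; split; first by split; [exact: open0|exact: closed0].
  by move=> h; exfalso; apply: nC.
have [g hg] := choice h.
exists g; split; first by move=> n; exact: (proj1 (hg n)).
move=> C cC; exists (f C); apply: finj; rewrite ?inE //; first exact: (proj1 (hg _)).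
by apply: (proj2 (hg _)); exists C.
Qed.

Lemma countable_metrizable (L : topologicalType) (hL : hausdorff_space L)
  (zL : clopen_base_space L) (cL : countable [set C : set L | clopen C]) :
  metrizable_space L.
Proof.
have [g [gc gs]] := enum_clopen cL.
pose sep n (x y : L) := ~ (g n x <-> g n y).
pose spec (x y : L) v := (v = 0 /\ forall n, ~ sep n x y) \/
   (exists n, sep n x y /\ (forall k, (k < n)%nat -> ~ sep k x y) /\ v = (/2) ^ n).
have hex : forall p : L * L, exists v, spec p.1 p.2 v.
  move=> [x y] /=.
  have [ex|nex] := pselect (exists n, sep n x y); last first.
    by exists 0; left; split=> // n hn; apply: nex; exists n.
  have ex' : exists n, `[< sep n x y >] by case: ex => n hn; exists n; apply/asboolP.
  case: (ex_minnP ex') => n /asboolP sn hmin.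
  exists ((/2) ^ n); right; exists n; split=> //; split=> // k kn sk.
  have : `[< sep k x y >] by apply/asboolP.
  by move/hmin; rewrite leqNgt kn.
have [dd hdd] := choice hex.
pose d x y := dd (x, y).
have hd : forall x y, spec x y (d x y) by move=> x y; exact: (hdd (x, y)).
have d0 : forall x y, 0 <= d x y.
  move=> x y; case: (hd x y) => [[-> _]|[n [_ [_ ->]]]]; first lra.
  exact: Rlt_le (half_pow_pos n).
have dlt : forall x y m, d x y < (/2) ^ m <-> forall k, (k <= m)%nat -> ~ sep k x y.
  move=> x y m; case: (hd x y) => [[-> hn]|[n [sn [hmin ->]]]].
    by split=> // _; exact: half_pow_pos.
  split.
    move=> h k km sk; have nm : (m < n)%nat.
      by rewrite ltnNge; apply/negP => /half_pow_le; lra.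
    by apply: (hmin k) => //; apply: leq_ltn_trans km nm.
  move=> h; apply: half_pow_lt; rewrite ltnNge; apply/negP => nm.
  exact: (h n nm).
have sepsym : forall n x y, sep n x y -> sep n y x.
  by move=> n x y h h'; apply: h; split; apply h'.
have dge : forall x y n, sep n x y -> (/2) ^ n <= d x y.
  move=> x y n sn; apply: Rnot_lt_le => /dlt h; exact: (h n (leqnn n)).
exists d; split; first exact: d0.
split.
  move=> x y; split; last first.
    move=> <-; case: (hd x x) => [[-> //]|[n [sn _]]].
    by exfalso; apply: sn.
  move=> dxy; have nsep : forall n, ~ sep n x y.
    move=> n sn; have := dge x y n sn; have := half_pow_pos n; lra.
  have [//|nxy] := eqVneq x y.
  have [A [oA xA yA]] := hausdorff_accessible hL nxy.
  move: xA yA; rewrite !inE => xA yA.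
  have [V [cV [Vx VA]]] := zL A x oA xA.
  have [k gk] := gs V cV; have : sep k x y.
    by rewrite /sep gk => h; apply: yA; apply: VA; apply h.
  by move/nsep.
split.
  move=> x y; case: (hd x y) => [[-> hn]|[n [sn [hmin ->]]]].
    case: (hd y x) => [[-> //]|[n [sn _]]].
    by exfalso; apply: (hn n); apply: sepsym.
  case: (hd y x) => [[_ hn]|[m [sm [hmin' ->]]]].
    by exfalso; apply: (hn n); apply: sepsym.
  have [nm|mn|->] := ltngtP n m.
  - by exfalso; apply: (hmin' n nm); apply: sepsym.
  - by exfalso; apply: (hmin m mn); apply: sepsym.
  - by [].
split.
  move=> x y z; case: (hd x z) => [[-> _]|[n [sn [_ ->]]]].
    by have := d0 x y; have := d0 y z; lra.
  have [sxy|nsxy] := pselect (sep n x y).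
    by have := dge _ _ _ sxy; have := d0 y z; lra.
  have syz : sep n y z.
    move: nsxy => /contrapT hxy h; apply: sn.
    by split=> hh; [apply/h/hxy|apply/hxy/h].
  by have := dge _ _ _ syz; have := d0 x y; lra.
have Sopen : forall k x, open [set y | g k y <-> g k x].
  move=> k x; have [gx|ngx] := pselect (g k x).
    suff -> : [set y | g k y <-> g k x] = g k by exact: (proj1 (gc k)).
    by rewrite predeqE => y /=; split=> [[_ h]|gy]; [exact: h|by split].
  suff -> : [set y | g k y <-> g k x] = ~` g k.
    exact: closed_openC (proj2 (gc k)).
  rewrite predeqE => y /=; split=> [[h _] /h //|h]; split=> // /h [].
have Wopen : forall m x, open [set y | forall k, (k < m)%nat -> (g k y <-> g k x)].
  move=> m x; elim: m => [|m IH].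
    suff -> : [set y | forall k, (k < 0)%nat -> (g k y <-> g k x)] = setT by exact: openT.
    by rewrite predeqE => y; split=> // _ k.
  suff -> : [set y | forall k, (k < m.+1)%nat -> (g k y <-> g k x)] =
     [set y | forall k, (k < m)%nat -> (g k y <-> g k x)] `&` [set y | g m y <-> g m x].
    exact: openI.
  rewrite predeqE => y /=; split.
    by move=> h; split; [move=> k km; apply: h; apply: ltnW|apply: h].
  move=> [h1 h2] k; rewrite ltnS leq_eqVlt => /orP[/eqP ->//|]; exact: h1.
move=> A; split.
  move=> oA x Ax; have [V [cV [Vx VA]]] := zL A x oA Ax.
  have [k gk] := gs V cV; exists ((/2) ^ k); split; first exact: half_pow_pos.
  move=> y /= /dlt /(_ k (leqnn k)) h; apply: VA; rewrite -gk.
  by apply: contrapT => ny; apply: h => hh; apply: ny; apply hh; rewrite gk.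
move=> hA.
have hm : forall x, exists m, A x -> forall y, d x y < (/2) ^ m -> A y.
  move=> x; have [Ax|nAx] := pselect (A x); last by exists O.
  have [e [e0 he]] := hA x Ax; have [m hm] := half_pow_small e0.
  by exists m => _ y hy; apply: he => /=; lra.
have [m hm'] := choice hm.
suff -> : A = \bigcup_(x in A) [set y | forall k, (k < (m x).+1)%nat -> (g k y <-> g k x)].
  by apply: bigcup_open => x _; exact: Wopen.
rewrite predeqE => y; split.
  by move=> Ay; exists y => //= k _.
move=> [x Ax /= hy]; apply: (hm' x Ax); apply/dlt => k km sk.
have [h1 h2] := hy k km; by apply: sk; split; [exact: h2|exact: h1].
Qed.
Local Close Scope R_scope.
Definition clof (K : topologicalType) (x : K) : set (set K) :=
  [set A | clopen A /\ A x].

Definition QK (K : topologicalType) := {p : set (set K) | exists x, p = clof x}.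
HB.instance Definition _ (K : topologicalType) := gen_eqMixin (QK K).
HB.instance Definition _ (K : topologicalType) := gen_choiceMixin (QK K).

Definition rep (K : topologicalType) (q : QK K) : K := projT1 (cid (proj2_sig q)).

Lemma valE (K : topologicalType) (q : QK K) A : proj1_sig q A <-> clopen A /\ A (rep q).
Proof.
rewrite /rep; case: (cid _) => x /= ->; by [].
Qed.

Definition opQ (K : topologicalType) (U : set (QK K)) : Prop :=
  forall q, U q -> exists A, clopen A /\ proj1_sig q A /\ (forall q', proj1_sig q' A -> U q').

Lemma opQT K : opQ (@setT (QK K)).
Proof.
move=> q _; exists setT; split; first by split; [exact: openT|exact: closedT].
by split=> // ; apply/valE; split=> //; split; [exact: openT|exact: closedT].
Qed.

Lemma opQI K : setI_closed (@opQ K).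
Proof.
move=> U V hU hV q [/hU [A [cA [qA hA]]] /hV [B [cB [qB hB]]]].
exists (A `&` B); split; first exact: clopenI.
move/valE: qA => [_ qA]; move/valE: qB => [_ qB].
split; first by apply/valE; split; [exact: clopenI|].
move=> q' /valE [_ [q'A q'B]]; split; [apply: hA|apply: hB]; apply/valE; by [].
Qed.

Lemma opQU K (I : Type) (f : I -> set (QK K)) : (forall i, opQ (f i)) -> opQ (\bigcup_i f i).
Proof.
move=> h q [i _ fiq]; have [A [cA [qA hA]]] := h i q fiq.
by exists A; split=> //; split=> // q' /hA; exists i.
Qed.

HB.instance Definition _ (K : topologicalType) :=
  isOpenTopological.Build (QK K) (@opQT K) (@opQI K) (@opQU K).

Lemma openQ K (U : set (QK K)) : open U <-> opQ U.
Proof. by []. Qed.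

Definition fq (K : topologicalType) (x : K) : QK K := exist _ (clof x) (ex_intro _ x erefl).
Lemma clopenC' (T : topologicalType) (A : set T) : clopen A -> clopen (~` A).
Proof. exact: (@clopenC T A A). Qed.

Definition BA (K : topologicalType) (A : set K) : set (QK K) := [set q | proj1_sig q A].

Lemma BA_open (K : topologicalType) (A : set K) : clopen A -> open (BA A).
Proof.
move=> cA; apply/openQ => q qA; exists A; split=> //; split=> //.
Qed.

Lemma BA_C (K : topologicalType) (A : set K) : clopen A -> ~` BA A = BA (~` A).
Proof.
move=> cA; have cA' := clopenC' cA.
rewrite predeqE => q /=; split.
  by move=> h; apply/valE; split=> // hq; apply: h; apply/valE.
by move/valE => [_ h] /valE [_].
Qed.

Lemma BA_clopen (K : topologicalType) (A : set K) : clopen A -> clopen (BA A).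
Proof.
move=> cA; split; first exact: BA_open.
rewrite -openC BA_C //; apply: BA_open; exact: clopenC'.
Qed.

Lemma fq_BA (K : topologicalType) (A : set K) : clopen A -> (@fq K) @^-1` (BA A) = A.
Proof. by move=> cA; rewrite predeqE => x /=; split=> [[]|]. Qed.

Lemma fq_cont (K : topologicalType) : continuous (@fq K).
Proof.
apply/continuousP => U /openQ oU.
suff -> : (@fq K) @^-1` U = \bigcup_(A in [set A | clopen A /\ BA A `<=` U]) A.
  by apply: bigcup_open => A [[oA _] _].
rewrite predeqE => x; split.
  move=> /= Ux; have [A [cA [xA hA]]] := oU _ Ux.
  exists A; first by split=> // q /hA.
  by case: xA.
move=> [A [cA sA] Ax]; apply: sA => /=; by [].
Qed.

Lemma QK_hausdorff (K : topologicalType) : hausdorff_space (QK K).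
Proof.
rewrite open_hausdorff => q1 q2 /eqP n12.
have sepA : forall q1 q2 : QK K, forall A, proj1_sig q1 A -> ~ proj1_sig q2 A ->
   exists2 AB : set (QK K) * set (QK K), (q1 \in AB.1 /\ q2 \in AB.2) &
     [/\ open AB.1, open AB.2 & AB.1 `&` AB.2 == set0].
  move=> p1 p2 A p1A p2A; have cA : clopen A by case/valE: p1A.
  exists (BA A, BA (~` A)); first by split; rewrite inE //= -BA_C.
  split; [exact: BA_open|apply: BA_open; exact: clopenC'|].
  by apply/eqP; rewrite -BA_C // setICr.
have [A hA] : exists A, ~ (proj1_sig q1 A <-> proj1_sig q2 A).
  apply: contrapT => hn; apply: n12.
  move: hn; case: q1 => p1 h1; case: q2 => p2 h2 /= hn.
  have e : p1 = p2.
    rewrite predeqE => A; apply: contrapT => hA; apply: hn; by exists A.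
  subst p2; congr exist; exact: Prop_irrelevance.
have [q1A|nq1A] := pselect (proj1_sig q1 A).
  by apply: (sepA _ _ A q1A) => q2A; apply: hA; split.
have q2A : proj1_sig q2 A.
  by apply: contrapT => nq2A; apply: hA; split=> h; [exfalso; apply: nq1A|exfalso; apply: nq2A].
have cA : clopen A by case/valE: q2A.
apply: (sepA _ _ (~` A)).
  by apply/valE; split; [exact: clopenC'| move=> h; apply: nq1A; apply/valE].
by move/valE => [_ h]; apply: h; case/valE: q2A.
Qed.

Lemma QK_zero (K : topologicalType) : clopen_base_space (QK K).
Proof.
move=> U q /openQ oU Uq; have [A [cA [qA hA]]] := oU q Uq.
by exists (BA A); split; [exact: BA_clopen|split].
Qed.

Theorem lemma7p1 (K : topologicalType) (hK : hausdorff_space K)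
    (cK : compact [set: K]) :
  (forall (L : topologicalType) (f : K -> L),
      hausdorff_space L -> continuous f -> (forall y : L, exists x : K, f x = y) ->
      clopen_base_space L -> metrizable_space L)
  <-> countable [set A : set K | clopen A].
Proof.
split.
  move=> H.
  have fsurj : forall q : QK K, exists x, @fq K x = q.
    move=> [p hp]; have [x ex] := hp; exists x; subst p; congr exist; exact: Prop_irrelevance.
  have [d hd] := H (QK K) (@fq K) (@QK_hausdorff K) (@fq_cont K) fsurj (@QK_zero K).
  have cQ : compact [set: QK K].
    have -> : [set: QK K] = (@fq K) @` [set: K].
      by rewrite predeqE => q; split=> // _; have [x <-] := fsurj q; exists x.
    apply: continuous_compact => //; apply: continuous_subspaceT; exact: fq_cont.
  have /countable_injP [h hinj] := compact_metric_countable cQ hd.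
  apply/countable_injP; exists (fun A => h (BA A)).
  move=> A1 A2; rewrite !inE => c1 c2 e.
  rewrite -(fq_BA c1) -(fq_BA c2); congr (_ @^-1` _); apply: hinj => //;
    rewrite inE; exact: BA_clopen.
move=> cnt L f hL fc fs zL; apply: countable_metrizable => //.
have /countable_injP [h hinj] := cnt.
have pc : forall B : set L, clopen B -> clopen (f @^-1` B).
  move=> B [oB clB]; split; first exact: (proj1 (continuousP f) fc).
  rewrite -openC; exact: ((proj1 (continuousP f) fc) (~` B) (closed_openC clB)).
apply/countable_injP; exists (fun B => h (f @^-1` B)).
move=> B1 B2; rewrite !inE => c1 c2 e.
have e' : f @^-1` B1 = f @^-1` B2 by apply: hinj => //; rewrite inE; exact: pc.
rewrite predeqE => y; have [x <-] := fs y.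
by have := congr1 (fun S => S x) e'; move=> /= ->.
Qed.
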